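(* Let $V=\{0,\tfrac12,1\}$ and consider languages with a constant expressive semantics whose consequence relation is induced by one of the five intersective mixed consequence truth-relations $ss=\models_{\{1\},\{1\}}$, $tt=\models_{\{1,\frac12\},\{1,\frac12\}}$, $st=\models_{\{1\},\{1,\frac12\}}$, $ts=\models_{\{1,\frac12\},\{1\}}$, and $ss\cap tt$. Each of these five relations admits a G-disjunction and a G-conjunction. Each of $ss$, $tt$, $st$, $ts$ admits a G-negation and a G-conditional, whereas $ss\cap tt$ admits neither a G-negation nor a G-conditional.
   Context: $\models_{\mathcal{D}_p,\mathcal{D}_c}$ holds between $\gamma,\delta\subseteq V$ iff ($\gamma\subseteq\mathcal{D}_p\Rightarrow\delta\cap\mathcal{D}_c\neq\emptyset$). A semantics: set of valuations mapping atoms to $V$, interpreting each connective by a fixed truth function, extended compositionally, with every assignment of values to finitely many distinct atoms realized; constant expressive: every $\alpha\in V$ is the constant value of some formula. Induced consequence: $\Gamma\vdash\Delta$ iff $v(\Gamma)\models v(\Delta)$ for all valuations $v$; write $\Gamma,A$ for $\Gamma\cup\{A\}$. A relation admits a G-connective if some truth function, assigned to a connective, makes it satisfy, for all sets $\Gamma,\Delta$ and formulas $A,B$: G-conjunction: $\Gamma,A\wedge B\vdash\Delta$ iff $\Gamma,A,B\vdash\Delta$; $\Gamma\vdash A\wedge B,\Delta$ iff ($\Gamma\vdash A,\Delta$ and $\Gamma\vdash B,\Delta$). G-disjunction: $\Gamma\vdash A\vee B,\Delta$ iff $\Gamma\vdash A,B,\Delta$; $\Gamma,A\vee B\vdash\Delta$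 iff ($\Gamma,A\vdash\Delta$ and $\Gamma,B\vdash\Delta$). G-negation: $\Gamma,\neg A\vdash\Delta$ iff $\Gamma\vdash A,\Delta$; $\Gamma\vdash\neg A,\Delta$ iff $\Gamma,A\vdash\Delta$. G-conditional: $\Gamma\vdash A\to B,\Delta$ iff $\Gamma,A\vdash B,\Delta$; $\Gamma,A\to B\vdash\Delta$ iff ($\Gamma\vdash A,\Delta$ and $\Gamma,B\vdash\Delta$). *)

(* Defs.v *)
From mathcomp Require Import all_boot.
Set Implicit Arguments. Unset Strict Implicit. Unset Printing Implicit Defensive.

(* Truth values V = {0, 1/2, 1}. *)
Inductive V : Type := V0 | Vh | V1.

Inductive form (C : Type) (ar : C -> nat) : Type :=
| Atom : nat -> form ar
| Op : forall c : C, ('I_(ar c) -> form ar) -> form ar.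
Arguments Atom {C ar} _.
Arguments Op {C ar} c _.

Fixpoint eval (C : Type) (ar : C -> nat) (I : forall c, ('I_(ar c) -> V) -> V)
  (s : nat -> V) (A : form ar) : V :=
  match A with
  | Atom n => s n
  | Op c args => I c (fun i => eval I s (args i))
  end.

Definition rich (S : (nat -> V) -> Prop) : Prop :=
  forall (n : nat) (a : 'I_n -> nat) (x : 'I_n -> V),
    injective a -> exists s, S s /\ forall i, s (a i) = x i.

Definition const_expressive (C : Type) (ar : C -> nat)
  (I : forall c, ('I_(ar c) -> V) -> V) (S : (nat -> V) -> Prop) : Prop :=
  forall alpha : V, exists phi : form ar, forall s, S s -> eval I s phi = alpha.

Definition truth_rel := (V -> Prop) -> (V -> Prop) -> Prop.

Definition mixed (Dp Dc : V -> Prop) : truth_rel :=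
  fun g d => (forall x, g x -> Dp x) -> exists x, d x /\ Dc x.

Definition D1 (x : V) : Prop := x = V1.
Definition D1h (x : V) : Prop := x = V1 \/ x = Vh.

Definition ss : truth_rel := mixed D1 D1.
Definition tt : truth_rel := mixed D1h D1h.
Definition st : truth_rel := mixed D1 D1h.
Definition ts : truth_rel := mixed D1h D1.
Definition ss_cap_tt : truth_rel := fun g d => ss g d /\ tt g d.

Definition conseq (C : Type) (ar : C -> nat) (I : forall c, ('I_(ar c) -> V) -> V)
  (S : (nat -> V) -> Prop) (R : truth_rel)
  (G D : form ar -> Prop) : Prop :=
  forall s, S s ->
    R (fun x => exists A, G A /\ eval I s A = x)
      (fun x => exists A, D A /\ eval I s A = x).

Definition addf (C : Type) (G : C -> Prop) (A : C) : C -> Prop :=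
  fun B => G B \/ B = A.

(* Extending a language by one fresh connective (None) of arity k. *)
Definition ext_ar (C : Type) (ar : C -> nat) (k : nat) (o : option C) : nat :=
  match o with Some c => ar c | None => k end.

Definition ext_int (C : Type) (ar : C -> nat) (I : forall c, ('I_(ar c) -> V) -> V)
  (k : nat) (f : ('I_k -> V) -> V) : forall o, ('I_(ext_ar ar k o) -> V) -> V :=
  fun o => match o with Some c => I c | None => f end.

Definition un (T : Type) (A : T) : 'I_1 -> T := fun _ => A.
Definition bin (T : Type) (A B : T) : 'I_2 -> T :=
  fun i => if val i == 0 then A else B.

Section G.
Variables (C : Type) (ar : C -> nat) (I : forall c, ('I_(ar c) -> V) -> V)
  (S : (nat -> V) -> Prop) (R : truth_rel).

Definition admits_G_conj : Prop :=
  exists f : ('I_2 -> V) -> V,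
    let L := form (ext_ar ar 2) in
    let cs := conseq (ext_int I f) S R in
    let cj (A B : L) : L := Op None (bin A B) in
    forall (G D : L -> Prop) (A B : L),
      (cs (addf G (cj A B)) D <-> cs (addf (addf G A) B) D) /\
      (cs G (addf D (cj A B)) <-> cs G (addf D A) /\ cs G (addf D B)).

Definition admits_G_disj : Prop :=
  exists f : ('I_2 -> V) -> V,
    let L := form (ext_ar ar 2) in
    let cs := conseq (ext_int I f) S R in
    let dj (A B : L) : L := Op None (bin A B) in
    forall (G D : L -> Prop) (A B : L),
      (cs G (addf D (dj A B)) <-> cs G (addf (addf D A) B)) /\
      (cs (addf G (dj A B)) D <-> cs (addf G A) D /\ cs (addf G B) D).

Definition admits_G_neg : Prop :=
  exists f : ('I_1 -> V) -> V,
    let L := form (ext_ar ar 1) in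
    let cs := conseq (ext_int I f) S R in
    let ng (A : L) : L := Op None (un A) in
    forall (G D : L -> Prop) (A : L),
      (cs (addf G (ng A)) D <-> cs G (addf D A)) /\
      (cs G (addf D (ng A)) <-> cs (addf G A) D).

Definition admits_G_cond : Prop :=
  exists f : ('I_2 -> V) -> V,
    let L := form (ext_ar ar 2) in
    let cs := conseq (ext_int I f) S R in
    let im (A B : L) : L := Op None (bin A B) in
    forall (G D : L -> Prop) (A B : L),
      (cs G (addf D (im A B)) <-> cs (addf G A) (addf D B)) /\
      (cs (addf G (im A B)) D <-> cs G (addf D A) /\ cs (addf G B) D).
End G.

(* Main.v *)
Require Import Defs.
From mathcomp Require Import all_boot.
From Stdlib Require Import Classical FunctionalExtensionality PropExtensionality.
Set Implicit Arguments.

Section PV.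
Variables (C : Type) (ar : C -> nat) (J : forall c, ('I_(ar c) -> V) -> V) (s : nat -> V).
Variables (Dp Dc : V -> Prop).

Definition vals (G : form ar -> Prop) : V -> Prop :=
  fun x => exists A, G A /\ eval J s A = x.
Definition P (G D : form ar -> Prop) : Prop := mixed Dp Dc (vals G) (vals D).

Lemma addf_l G A : (forall x, vals (addf G A) x -> Dp x) <->
  (forall x, vals G x -> Dp x) /\ Dp (eval J s A).
Proof.
split.
- intros H; split.
  + intros x [B [HB <-]]. apply H. exists B; split; [left|]; auto.
  + apply H. exists A; split; [right|]; auto.
- intros [H1 H2] x [B [[HB| ->] <-]]; auto. apply H1; exists B; auto.
Qed.

Lemma addf_r D A : (exists x, vals (addf D A) x /\ Dc x) <->
  (exists x, vals D x /\ Dc x) \/ Dc (eval J s A).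
Proof.
split.
- intros [x [[B [[HB| ->] <-]] Hc]]; [left; exists (eval J s B); split; [exists B|]|right]; auto.
- intros [[x [[B [HB <-]] Hc]]|H].
  + exists (eval J s B); split; auto. exists B; split; [left|]; auto.
  + exists (eval J s A); split; auto. exists A; split; [right|]; auto.
Qed.

Ltac prep := unfold P, mixed; repeat (rewrite addf_l || rewrite addf_r).

Lemma pv_l_and G D X A B : (Dp (eval J s X) <-> Dp (eval J s A) /\ Dp (eval J s B)) ->
  (P (addf G X) D <-> P (addf (addf G A) B) D).
Proof. intro H; prep; rewrite H; tauto. Qed.
Lemma pv_r_and G D X A B : (Dc (eval J s X) <-> Dc (eval J s A) /\ Dc (eval J s B)) ->
  (P G (addf D X) <-> P G (addf D A) /\ P G (addf D B)).
Proof. intro H; prep; rewrite H; tauto. Qed.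
Lemma pv_r_or G D X A B : (Dc (eval J s X) <-> Dc (eval J s A) \/ Dc (eval J s B)) ->
  (P G (addf D X) <-> P G (addf (addf D A) B)).
Proof. intro H; prep; rewrite H; tauto. Qed.
Lemma pv_l_or G D X A B : (Dp (eval J s X) <-> Dp (eval J s A) \/ Dp (eval J s B)) ->
  (P (addf G X) D <-> P (addf G A) D /\ P (addf G B) D).
Proof. intro H; prep; rewrite H; tauto. Qed.
Lemma pv_l_neg G D X A : (Dp (eval J s X) <-> ~ Dc (eval J s A)) ->
  (P (addf G X) D <-> P G (addf D A)).
Proof. intro H; prep; rewrite H; destruct (classic (Dc (eval J s A))); tauto. Qed.
Lemma pv_r_neg G D X A : (Dc (eval J s X) <-> ~ Dp (eval J s A)) ->
  (P G (addf D X) <-> P (addf G A) D).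
Proof. intro H; prep; rewrite H; destruct (classic (Dp (eval J s A))); tauto. Qed.
Lemma pv_r_imp G D X A B : (Dc (eval J s X) <-> ~ Dp (eval J s A) \/ Dc (eval J s B)) ->
  (P G (addf D X) <-> P (addf G A) (addf D B)).
Proof. intro H; prep; rewrite H; destruct (classic (Dp (eval J s A))); tauto. Qed.
Lemma pv_l_imp G D X A B : (Dp (eval J s X) <-> ~ Dc (eval J s A) \/ Dp (eval J s B)) ->
  (P (addf G X) D <-> P G (addf D A) /\ P (addf G B) D).
Proof. intro H; prep; rewrite H; destruct (classic (Dc (eval J s A))); tauto. Qed.
End PV.
Set Implicit Arguments.

Definition o1 : 'I_2 := @Ordinal 2 1 isT.
Definition f2 (h : V -> V -> V) : ('I_2 -> V) -> V := fun g => h (g ord0) (g o1).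
Definition f1 (n : V -> V) : ('I_1 -> V) -> V := fun g => n (g ord0).

Section Adm.
Variables (C : Type) (ar : C -> nat) (I : forall c, ('I_(ar c) -> V) -> V)
  (S : (nat -> V) -> Prop).

Lemma eval_bin h s (A B : form (ext_ar ar 2)) :
  eval (ext_int I (f2 h)) s (Op None (bin A B)) =
  h (eval (ext_int I (f2 h)) s A) (eval (ext_int I (f2 h)) s B).
Proof. reflexivity. Qed.
Lemma eval_un n s (A : form (ext_ar ar 1)) :
  eval (ext_int I (f1 n)) s (Op None (un A)) = n (eval (ext_int I (f1 n)) s A).
Proof. reflexivity. Qed.

Section L.
Variables (C' : Type) (ar' : C' -> nat) (J : forall c, ('I_(ar' c) -> V) -> V).
Lemma cs_iff Dp Dc G D G' D' :
  (forall s, P J s Dp Dc G D <-> P J s Dp Dc G' D') ->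
  (conseq J S (mixed Dp Dc) G D <-> conseq J S (mixed Dp Dc) G' D').
Proof. intros K; split; intros H s Hs; apply K; exact (H s Hs). Qed.
Lemma cs_and Dp Dc G D G1 D1 G2 D2 :
  (forall s, P J s Dp Dc G D <-> P J s Dp Dc G1 D1 /\ P J s Dp Dc G2 D2) ->
  (conseq J S (mixed Dp Dc) G D <->
   conseq J S (mixed Dp Dc) G1 D1 /\ conseq J S (mixed Dp Dc) G2 D2).
Proof.
intros K; split; [intros H; split; intros s Hs; apply K, H, Hs
  | intros [H1 H2] s Hs; apply K; split; [exact (H1 s Hs)|exact (H2 s Hs)]].
Qed.
Lemma cs2_iff G D G' D' :
  (forall s, P J s D1 D1 G D <-> P J s D1 D1 G' D') ->
  (forall s, P J s D1h D1h G D <-> P J s D1h D1h G' D') ->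
  (conseq J S ss_cap_tt G D <-> conseq J S ss_cap_tt G' D').
Proof. intros K1 K2; split; intros H s Hs; destruct (H s Hs); split; [apply K1|apply K2|apply K1|apply K2]; auto. Qed.
Lemma cs2_and G D G1 D1' G2 D2 :
  (forall s, P J s D1 D1 G D <-> P J s D1 D1 G1 D1' /\ P J s D1 D1 G2 D2) ->
  (forall s, P J s D1h D1h G D <-> P J s D1h D1h G1 D1' /\ P J s D1h D1h G2 D2) ->
  (conseq J S ss_cap_tt G D <->
   conseq J S ss_cap_tt G1 D1' /\ conseq J S ss_cap_tt G2 D2).
Proof.
intros K1 K2; split.
- intros H; split; intros s Hs; destruct (H s Hs) as [Ha Hb];
  apply K1 in Ha; apply K2 in Hb; split; tauto.
- intros [H1 H2] s Hs; destruct (H1 s Hs); destruct (H2 s Hs); split;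
  [apply K1|apply K2]; split; assumption.
Qed.
End L.

Ltac fin H := first [rewrite eval_bin; apply H | rewrite eval_un; apply H].

Lemma adm_conj Dp Dc h :
  (forall a b, Dp (h a b) <-> Dp a /\ Dp b) ->
  (forall a b, Dc (h a b) <-> Dc a /\ Dc b) ->
  admits_G_conj I S (mixed Dp Dc).
Proof.
intros Hp Hc; exists (f2 h); cbv zeta; intros G D A B; split.
- apply cs_iff; intro s; apply pv_l_and; fin Hp.
- apply cs_and; intro s; apply pv_r_and; fin Hc.
Qed.
Lemma adm_disj Dp Dc h :
  (forall a b, Dp (h a b) <-> Dp a \/ Dp b) ->
  (forall a b, Dc (h a b) <-> Dc a \/ Dc b) ->
  admits_G_disj I S (mixed Dp Dc).
Proof.
intros Hp Hc; exists (f2 h); cbv zeta; intros G D A B; split.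
- apply cs_iff; intro s; apply pv_r_or; fin Hc.
- apply cs_and; intro s; apply pv_l_or; fin Hp.
Qed.
Lemma adm_neg Dp Dc n :
  (forall a, Dp (n a) <-> ~ Dc a) ->
  (forall a, Dc (n a) <-> ~ Dp a) ->
  admits_G_neg I S (mixed Dp Dc).
Proof.
intros Hp Hc; exists (f1 n); cbv zeta; intros G D A; split.
- apply cs_iff; intro s; apply pv_l_neg; fin Hp.
- apply cs_iff; intro s; apply pv_r_neg; fin Hc.
Qed.
Lemma adm_cond Dp Dc h :
  (forall a b, Dp (h a b) <-> ~ Dc a \/ Dp b) ->
  (forall a b, Dc (h a b) <-> ~ Dp a \/ Dc b) ->
  admits_G_cond I S (mixed Dp Dc).
Proof.
intros Hp Hc; exists (f2 h); cbv zeta; intros G D A B; split.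
- apply cs_iff; intro s; apply pv_r_imp; fin Hc.
- apply cs_and; intro s; apply pv_l_imp; fin Hp.
Qed.

Lemma adm_conj2 h :
  (forall a b, D1 (h a b) <-> D1 a /\ D1 b) ->
  (forall a b, D1h (h a b) <-> D1h a /\ D1h b) ->
  admits_G_conj I S ss_cap_tt.
Proof.
intros Hp Hc; exists (f2 h); cbv zeta; intros G D A B; split.
- apply cs2_iff; intro s; apply pv_l_and; [fin Hp|fin Hc].
- apply cs2_and; intro s; apply pv_r_and; [fin Hp|fin Hc].
Qed.
Lemma adm_disj2 h :
  (forall a b, D1 (h a b) <-> D1 a \/ D1 b) ->
  (forall a b, D1h (h a b) <-> D1h a \/ D1h b) ->
  admits_G_disj I S ss_cap_tt.
Proof.
intros Hp Hc; exists (f2 h); cbv zeta; intros G D A B; split.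
- apply cs2_iff; intro s; apply pv_r_or; [fin Hp|fin Hc].
- apply cs2_and; intro s; apply pv_l_or; [fin Hp|fin Hc].
Qed.
End Adm.

Definition vmax a b := match a, b with
  | V1, _ | _, V1 => V1 | Vh, _ | _, Vh => Vh | _, _ => V0 end.
Definition vmin a b := match a, b with
  | V0, _ | _, V0 => V0 | Vh, _ | _, Vh => Vh | _, _ => V1 end.
Definition nss a := match a with V1 => V0 | _ => V1 end.
Definition ntt a := match a with V0 => V1 | _ => V0 end.
Definition nk a := match a with V0 => V1 | Vh => Vh | V1 => V0 end.

Ltac vt := intros; repeat match goal with a : V |- _ => destruct a end;
  unfold D1, D1h; simpl; intuition discriminate.

Lemma t1 : forall a b, D1 (vmax a b) <-> D1 a \/ D1 b. Proof. vt. Qed.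
Set Implicit Arguments.

Section Neg.
Variables (C : Type) (ar : C -> nat) (I : forall c, ('I_(ar c) -> V) -> V)
  (S : (nat -> V) -> Prop).

Fixpoint emb k (A : form ar) : form (ext_ar ar k) :=
  match A with
  | Atom n => Atom n
  | Op c args => @Op _ (ext_ar ar k) (Some c) (fun i => emb k (args i))
  end.

Lemma eval_emb k f s A : eval (ext_int I (k:=k) f) s (emb k A) = eval I s A.
Proof.
induction A as [n|c args IH]; simpl; [reflexivity|].
f_equal; apply functional_extensionality; intro i; apply IH.
Qed.

Lemma vals_addf C' (ar' : C' -> nat) (J : forall c, ('I_(ar' c) -> V) -> V) s G A :
  vals J s (addf G A) = fun x => vals J s G x \/ x = eval J s A.
Proof.
apply functional_extensionality; intro x; apply propositional_extensionality.
unfold vals, addf; split.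
- intros [B [[HB| ->] <-]]; [left; exists B|right]; auto.
- intros [[B [HB <-]]| ->]; [exists B|exists A]; auto.
Qed.
Lemma vals_empty C' (ar' : C' -> nat) (J : forall c, ('I_(ar' c) -> V) -> V) s :
  vals J s (fun _ => False) = fun _ => False.
Proof.
apply functional_extensionality; intro x; apply propositional_extensionality.
unfold vals; split; [intros [B [[] _]]|intros []].
Qed.
Lemma conseqE C' (ar' : C' -> nat) (J : forall c, ('I_(ar' c) -> V) -> V) R G D :
  conseq J S R G D <-> forall s, S s -> R (vals J s G) (vals J s D).
Proof. reflexivity. Qed.

Lemma vals_addf' C' (ar' : C' -> nat) (J : forall c, ('I_(ar' c) -> V) -> V) s G A x :
  vals J s (addf G A) x <-> vals J s G x \/ x = eval J s A.
Proof. rewrite vals_addf; reflexivity. Qed.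
Lemma vals_empty' C' (ar' : C' -> nat) (J : forall c, ('I_(ar' c) -> V) -> V) s x :
  vals J s (fun _ => False) x <-> False.
Proof. rewrite vals_empty; reflexivity. Qed.
Ltac simplv H := repeat (setoid_rewrite vals_addf in H || setoid_rewrite vals_empty in H || setoid_rewrite vals_addf' in H || setoid_rewrite vals_empty' in H); cbv beta in H.

Hypothesis Hr : rich S.
Hypothesis Hce : const_expressive I S.

Lemma S_ne : exists s, S s.
Proof.
destruct (Hr (a := fun i : 'I_0 => 0) (fun i => V0)) as [s [Hs _]].
- intros [i Hi]; discriminate Hi.
- exists s; exact Hs.
Qed.

Lemma ex_or (P Q : V -> Prop) e : (exists x, (P x \/ x = e) /\ Q x) <-> (exists x, P x /\ Q x) \/ Q e.
Proof. split; [intros [x [[H| ->] Hq]]; [left; exists x|right]; auto | intros [[x [Hp Hq]]|Hq]; [exists x|exists e]; auto]. Qed.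
Lemma ex_F (Q : V -> Prop) : (exists x, False /\ Q x) <-> False.
Proof. split; [intros [x [[] _]]|intros []]. Qed.
Lemma all_or (P Q : V -> Prop) e : (forall x, P x \/ x = e -> Q x) <-> (forall x, P x -> Q x) /\ Q e.
Proof. split; [intros H; split; auto | intros [H1 H2] x [Hp| ->]; auto]. Qed.
Lemma all_F (Q : V -> Prop) : (forall x, False -> Q x) <-> True.
Proof. split; auto; intros _ x []. Qed.
Ltac solv := unfold ss_cap_tt, ss, tt, mixed; cbv beta;
  repeat (setoid_rewrite ex_or || setoid_rewrite ex_F || setoid_rewrite all_or || setoid_rewrite all_F);
  unfold D1, D1h; intuition discriminate.
Ltac solvH H := unfold ss_cap_tt, ss, tt, mixed in H; cbv beta in H;
  repeat (setoid_rewrite ex_or in H || setoid_rewrite ex_F in H || setoid_rewrite all_or in H || setoid_rewrite all_F in H);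
  unfold D1, D1h in H; intuition discriminate.

Lemma no_neg : ~ admits_G_neg I S ss_cap_tt.
Proof.
intros [f H]; cbv zeta in H.
destruct (Hce Vh) as [c Hc].
set (q := emb 1 c).
assert (EQq : forall s, S s -> eval (ext_int I f) s q = Vh).
{ intros s Hs; unfold q; rewrite eval_emb; auto. }
assert (En : forall s, S s -> eval (ext_int I f) s (Op None (un q)) = f (fun _ => Vh)).
{ intros s Hs; simpl; f_equal; apply functional_extensionality; intro i; apply EQq; auto. }
destruct S_ne as [s0 Hs0].
destruct (H (addf (fun _ => False) q) (fun _ => False) q) as [H1 _].
destruct (H (fun _ => False) (fun _ => False) q) as [H2 _].
rewrite !conseqE in H1, H2.
assert (R1 : forall s, S s -> ss_cap_tt (vals (ext_int I f) s (addf (fun _ => False) q)) (vals (ext_int I f) s (addf (fun _ => False) q))) by (intros; rewrite !vals_addf !vals_empty; solv).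
pose proof (proj2 H1 R1 s0 Hs0) as R1x; clear R1; rename R1x into R1; rewrite !vals_addf !vals_empty in R1; rewrite EQq in R1; auto; rewrite En in R1; auto.
destruct (f (fun _ => Vh)) eqn:Ef; try solvH R1.
assert (R2 : forall s, S s -> ss_cap_tt (vals (ext_int I f) s (addf (fun _ => False) (Op None (un q)))) (vals (ext_int I f) s (fun _ => False))).
{ intros s Hs; rewrite !vals_addf !vals_empty En; auto; try rewrite Ef; solv. }
pose proof (proj1 H2 R2 s0 Hs0) as R2x; clear R2; rename R2x into R2; rewrite !vals_addf !vals_empty in R2. rewrite EQq in R2; auto; solvH R2. Qed.

Lemma no_cond : ~ admits_G_cond I S ss_cap_tt.
Proof.
intros [f H]; cbv zeta in H.
destruct (Hce Vh) as [c Hc]; destruct (Hce V0) as [d Hd].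
set (q := emb 2 c); set (z := emb 2 d).
assert (EQq : forall s, S s -> eval (ext_int I f) s q = Vh).
{ intros s Hs; unfold q; rewrite eval_emb; auto. }
assert (EQz : forall s, S s -> eval (ext_int I f) s z = V0).
{ intros s Hs; unfold z; rewrite eval_emb; auto. }
assert (Ei : forall s, S s -> eval (ext_int I f) s (Op None (bin q z)) =
   f (fun i : 'I_2 => if val i == 0 then Vh else V0)).
{ intros s Hs; simpl; f_equal; apply functional_extensionality; intro i; unfold bin.
  destruct i as [[|k] Hk]; [apply EQq|apply EQz]; auto. }
destruct S_ne as [s0 Hs0].
destruct (H (addf (fun _ => False) q) (fun _ => False) q z) as [H1 _].
destruct (H (fun _ => False) (fun _ => False) q z) as [_ H2].
rewrite !conseqE in H1, H2.
destruct (f (fun i : 'I_2 => if val i == 0 then Vh else V0)) eqn:Ef.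
- assert (R2 : forall s, S s -> ss_cap_tt (vals (ext_int I f) s (addf (fun _ => False) (Op None (bin q z)))) (vals (ext_int I f) s (fun _ => False))).
  { intros s Hs; rewrite !vals_addf !vals_empty Ei; auto; solv. }
  destruct (proj1 H2 R2) as [R R']. specialize (R s0 Hs0).
  rewrite !vals_addf !vals_empty in R; rewrite EQq in R; auto; solvH R.
- assert (R1 : forall s, S s -> ss_cap_tt (vals (ext_int I f) s (addf (fun _ => False) q)) (vals (ext_int I f) s (addf (fun _ => False) (Op None (bin q z))))).
  { intros s Hs; rewrite !vals_addf !vals_empty Ei; auto; rewrite EQq; auto; solv. }
  pose proof (proj1 H1 R1 s0 Hs0) as R.
  rewrite !vals_addf !vals_empty in R; rewrite EQq in R; auto; rewrite EQz in R; auto; solvH R.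
- assert (R1 : forall s, S s -> ss_cap_tt (vals (ext_int I f) s (addf (fun _ => False) q)) (vals (ext_int I f) s (addf (fun _ => False) (Op None (bin q z))))).
  { intros s Hs; rewrite !vals_addf !vals_empty Ei; auto; rewrite EQq; auto; solv. }
  pose proof (proj1 H1 R1 s0 Hs0) as R.
  rewrite !vals_addf !vals_empty in R; rewrite EQq in R; auto; rewrite EQz in R; auto; solvH R.
Qed.
End Neg.

Theorem theorem4p1 (C : Type) (ar : C -> nat)
  (I : forall c, ('I_(ar c) -> V) -> V) (S : (nat -> V) -> Prop) :
  rich S -> const_expressive I S ->
  (forall R, (R = ss \/ R = tt \/ R = st \/ R = ts \/ R = ss_cap_tt) ->
     admits_G_disj I S R /\ admits_G_conj I S R) /\
  (forall R, (R = ss \/ R = tt \/ R = st \/ R = ts) ->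
     admits_G_neg I S R /\ admits_G_cond I S R) /\
  ~ admits_G_neg I S ss_cap_tt /\ ~ admits_G_cond I S ss_cap_tt.
Proof.
intros Hr Hce; split; [|split; [|split]].
- intros R [->|[->|[->|[->| ->]]]];
  (split; [first [apply adm_disj2 with (h := vmax) | apply adm_disj with (h := vmax)]
          |first [apply adm_conj2 with (h := vmin) | apply adm_conj with (h := vmin)]]; vt).
- intros R [->|[->|[->| ->]]].
  + split; [apply adm_neg with (n := nss) | apply adm_cond with (h := fun a b => vmax (nss a) b)]; vt.
  + split; [apply adm_neg with (n := ntt) | apply adm_cond with (h := fun a b => vmax (ntt a) b)]; vt.
  + split; [apply adm_neg with (n := nk) | apply adm_cond with (h := fun a b => vmax (nk a) b)]; vt.
  + split; [apply adm_neg with (n := nk) | apply adm_cond with (h := fun a b => vmax (nk a) b)]; vt.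
- apply no_neg; auto.
- apply no_cond; auto.
Qed.
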